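(* Every rectangular satin has even order $n$. If $n\equiv 2 \pmod 4$, the satin belongs to species $26_o$; if $4\mid n$, it belongs to species $26_e$.
   Context: A prefabric consists of two perpendicular layers of unit-width strands, warps (vertical) and wefts (horizontal). The plane is divided into unit square cells. Each cell is dark if the warp is on top (seen from the front) and pale otherwise. A symmetry is an isometry of the plane, possibly combined with the side reversal $\tau$, that preserves the prefabric. $G_1$ denotes the planar part of the symmetry group, and $H_1$ its side-preserving subgroup. The $(n,s)$ satin, with $1<s<n-1$ and $\gcd(n,s)=1$, is the design of period $n$ in which row $i$ has its single dark cell in column $is \bmod n$. It is isonemal iff $s^2\equiv\pm1\pmod n$. It is square iff $s^2\equiv -1 \pmod n$. A non-square isonemal satin is called rectangular if $n$ is even and $s^2\equiv 1\pmod{2n}$. A prefabric belongs to species 26 if: - $G_1$ is of crystallographic type $pmm$, with mirrors at $45^\circ$ to the strands, every mirror symmetry being combined with $\tau$; - $H_1$ is of type $p2$, consisting of translations and side-preserving half-turns; - some half-turn centres lie at cell centres and others at cell corners. Within species 26: - Species $26_o$: every mirror carries half-turn centres alternately at cell centres and cell corners. Equivalently, a quarter of the $G_1$ lattice unit measures $a\delta$ by $b\delta$ with $a,b$ both odd, where $\delta$ is the length of a cell diagonal. - Species $26_e$: the mirrors in one direction contain alternately only cell-centre and only cell-corner half-turn centres, while the mirrors in the other direction each contain both kinds alternately. Equivalently, the corresponding dimensions are $a\delta$ by $b\delta$ with $a$ odd and $b$ even. *)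

(* Defs.v *)
From Stdlib Require Import ZArith Bool.
Open Scope Z_scope.

(* A design: [d x y = true] iff the cell in column [x], row [y]
   (the unit square [x,x+1] x [y,y+1]) is dark, i.e. the warp (vertical
   strand) is on top as seen from the front. *)
Definition design := Z -> Z -> bool.

Definition satin (n s : Z) : design := fun x y => (x - y * s) mod n =? 0.

(* Points of the plane are written in DOUBLED coordinates: the point (u,v)
   denotes (u/2, v/2).  Cell (x,y) has centre (2x+1, 2y+1); cell corners are
   the points with both coordinates even. *)
Definition point := (Z * Z)%type.

(* Linear parts: signed permutation matrices (the dihedral group of order 8):
   first swap the coordinates if [sw], then negate the first coordinate if
   [nx] and the second if [ny]. *)
Record lin := Lin { sw : bool; nx : bool; ny : bool }.

Definition lin_app (a : lin) (p : point) : point :=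
  let q := if sw a then (snd p, fst p) else p in
  ((if nx a then - fst q else fst q), (if ny a then - snd q else snd q)).

Definition lin_id  := Lin false false false.
Definition lin_neg := Lin false true true.
Definition lin_D   := Lin true false false.
Definition lin_mD  := Lin true true true.

(* orientation reversing linear part (determinant -1) *)
Definition lin_rev (a : lin) : bool := xorb (sw a) (xorb (nx a) (ny a)).

Record isom := Isom { ilin : lin; tr : point }.

Definition app (g : isom) (p : point) : point :=
  let q := lin_app (ilin g) p in (fst q + fst (tr g), snd q + snd (tr g)).

(* g maps cells to cells (centres of cells to centres of cells) *)
Definition grid_preserving (g : isom) : Prop :=
  Z.even (fst (tr g)) = true /\ Z.even (snd (tr g)) = true.

Definition cell_of (p : point) : Z * Z := ((fst p - 1) / 2, (snd p - 1) / 2).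

(* (g, tau) is a symmetry of the prefabric with design d: g maps the cell c
   to the cell g(c); the strand on top at g(c) must be the image of the
   strand on top at c (after turning the fabric over if tau = true).  Since an
   isometry that exchanges the two strand directions maps warps to wefts, and
   the side reversal tau also reverses which strand is on top, the colour of
   g(c) is the colour of c complemented once for each of these. *)
Definition is_sym (d : design) (g : isom) (tau : bool) : Prop :=
  grid_preserving g /\
  forall x y : Z,
    let c := cell_of (app g (2 * x + 1, 2 * y + 1)) in
    d (fst c) (snd c) = xorb (d x y) (xorb (sw (ilin g)) tau).

Definition G1 (d : design) (g : isom) : Prop := exists tau, is_sym d g tau.
Definition H1 (d : design) (g : isom) : Prop := is_sym d g false.

Definition is_translation (g : isom) : Prop := ilin g = lin_id.
Definition is_halfturn (g : isom) : Prop := ilin g = lin_neg.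
Definition is_reflection (g : isom) : Prop :=
  lin_rev (ilin g) = true /\ exists p, app g p = p.

Definition rank2_translations (G : isom -> Prop) : Prop :=
  exists g h, G g /\ G h /\ is_translation g /\ is_translation h /\
    fst (tr g) * snd (tr h) - snd (tr g) * fst (tr h) <> 0.

(* G is of type pmm with mirrors at 45 degrees to the strands:
   a wallpaper group (rank-2 translation lattice; discreteness is automatic
   here) whose point group is {1, -1, D, -D} (D, -D the reflections in the
   diagonals), containing genuine reflections in both diagonal directions
   (this excludes pmg, pgg) and whose translation lattice is primitive
   rectangular with respect to the mirror directions (this excludes cmm). *)
Definition pmm45 (G : isom -> Prop) : Prop :=
  rank2_translations G /\
  (forall g, G g -> ilin g = lin_id \/ ilin g = lin_neg \/
                    ilin g = lin_D \/ ilin g = lin_mD) /\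
  (exists g, G g /\ ilin g = lin_D /\ is_reflection g) /\
  (exists g, G g /\ ilin g = lin_mD /\ is_reflection g) /\
  (forall g, G g -> is_translation g ->
     exists a b, G (Isom lin_id (a, a)) /\ G (Isom lin_id (b, - b)) /\
                 tr g = (a + b, a - b)).

Definition p2 (G : isom -> Prop) : Prop :=
  rank2_translations G /\
  (forall g, G g -> is_translation g \/ is_halfturn g) /\
  (exists g, G g /\ is_halfturn g).

Definition is_cell_centre (p : point) : Prop :=
  Z.odd (fst p) = true /\ Z.odd (snd p) = true.
Definition is_cell_corner (p : point) : Prop :=
  Z.even (fst p) = true /\ Z.even (snd p) = true.

Definition htc (d : design) (p : point) : Prop :=
  H1 d (Isom lin_neg (2 * fst p, 2 * snd p)).

Definition on_line (dir : bool) (k : Z) (p : point) : Prop :=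
  if dir then fst p + snd p = k else fst p - snd p = k.

Definition refl (dir : bool) (k : Z) : isom :=
  if dir then Isom lin_mD (k, k) else Isom lin_D (k, - k).

Definition mirror (d : design) (dir : bool) (k : Z) : Prop := G1 d (refl dir k).

(* p, q are consecutive half-turn centres along the line (the lines are
   graphs over the first coordinate, which orders them) *)
Definition consecutive (d : design) (dir : bool) (k : Z) (p q : point) : Prop :=
  on_line dir k p /\ on_line dir k q /\ htc d p /\ htc d q /\
  fst p < fst q /\
  ~ (exists r, on_line dir k r /\ htc d r /\ fst p < fst r < fst q).

Definition alternating_line (d : design) (dir : bool) (k : Z) : Prop :=
  (exists p, on_line dir k p /\ htc d p) /\
  (forall p, on_line dir k p -> htc d p -> is_cell_centre p \/ is_cell_corner p) /\
  (forall p q, consecutive d dir k p q -> (is_cell_centre p <-> is_cell_corner q)).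

Definition pure_line (d : design) (dir : bool) (k : Z) (K : point -> Prop) : Prop :=
  (exists p, on_line dir k p /\ htc d p) /\
  (forall p, on_line dir k p -> htc d p -> K p).

Definition species26 (d : design) : Prop :=
  pmm45 (G1 d) /\
  (forall g tau, is_sym d g tau -> is_reflection g -> tau = true) /\
  p2 (H1 d) /\
  (exists p, htc d p /\ is_cell_centre p) /\
  (exists p, htc d p /\ is_cell_corner p).

Definition species26o (d : design) : Prop :=
  species26 d /\
  forall dir k, mirror d dir k -> alternating_line d dir k.

Definition species26e (d : design) : Prop :=
  species26 d /\
  exists dir0 : bool,
    (forall k, mirror d (negb dir0) k -> alternating_line d (negb dir0) k) /\
    (forall k, mirror d dir0 k ->
       pure_line d dir0 k is_cell_centre \/ pure_line d dir0 k is_cell_corner) /\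
    (forall k k', mirror d dir0 k -> mirror d dir0 k' -> k < k' ->
       ~ (exists k'', mirror d dir0 k'' /\ k < k'' < k') ->
       (pure_line d dir0 k is_cell_centre <-> pure_line d dir0 k' is_cell_corner)).

Definition satin_params (n s : Z) : Prop := 1 < s < n - 1 /\ Z.gcd n s = 1.
Definition satin_isonemal (n s : Z) : Prop :=
  (s * s - 1) mod n = 0 \/ (s * s + 1) mod n = 0.
Definition satin_square (n s : Z) : Prop := (s * s + 1) mod n = 0.
Definition satin_rectangular (n s : Z) : Prop :=
  satin_params n s /\ satin_isonemal n s /\ ~ satin_square n s /\
  Z.even n = true /\ (2 * n | s * s - 1).

(* Main.v *)
Require Import Defs.
From Stdlib Require Import ZArith Lia Bool.
Open Scope Z_scope.

Definition Lm (n s x y : Z) : Prop := (n | x - y * s).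
Definition LmP n s (c : point) : Prop := Lm n s (fst c) (snd c).
Definition padd (c d : point) : point := (fst c + fst d, snd c + snd d).

Lemma satin_Lm n s x y : 0 < n -> (satin n s x y = true <-> Lm n s x y).
Proof. intro Hn. unfold satin, Lm. rewrite Z.eqb_eq. apply Z.mod_divide. lia. Qed.

Lemma lin_app_odd a x y : lin_app a (2*x+1, 2*y+1) =
  (2 * fst (lin_app a (x,y)) + fst (lin_app a (1,1)),
   2 * snd (lin_app a (x,y)) + snd (lin_app a (1,1))).
Proof. destruct a as [[] [] []]; unfold lin_app; cbn [sw nx ny fst snd]; f_equal; ring. Qed.

Definition img (g : isom) x y := cell_of (app g (2*x+1, 2*y+1)).

Lemma half (z w : Z) : z = w * 2 -> z / 2 = w.
Proof. intros ->. apply Z.div_mul. lia. Qed.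

Lemma img_formula g x y : grid_preserving g ->
  img g x y = padd (lin_app (ilin g) (x,y)) (img g 0 0).
Proof.
  destruct g as [a [t1 t2]]; unfold grid_preserving; simpl.
  intros [H1 H2]. apply Z.even_spec in H1, H2.
  destruct H1 as [m1 ->]. destruct H2 as [m2 ->].
  unfold img, cell_of, app, padd. cbn [ilin tr fst snd].
  rewrite lin_app_odd. rewrite (lin_app_odd a 0 0).
  replace (lin_app a (0,0)) with (0,0) by (destruct a as [[] [] []]; reflexivity).
  cbn [fst snd]. f_equal.
  - set (A := fst (lin_app a (x,y))). set (B := fst (lin_app a (1,1))).
    replace (2 * A + B + 2 * m1 - 1) with (A * 2 + (2*0 + B + 2*m1 - 1)) by ring.
    rewrite Z.div_add_l by lia. reflexivity.
  - set (A := snd (lin_app a (x,y))). set (B := snd (lin_app a (1,1))).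
    replace (2 * A + B + 2 * m2 - 1) with (A * 2 + (2*0 + B + 2*m2 - 1)) by ring.
    rewrite Z.div_add_l by lia. reflexivity.
Qed.

Lemma img_id t1 t2 x y : t1 = 2*x -> t2 = 2*y -> img (Isom lin_id (t1,t2)) 0 0 = (x,y).
Proof. intros -> ->. unfold img, cell_of, app, lin_app; cbn [ilin tr sw nx ny fst snd lin_id lin_neg lin_D lin_mD]. f_equal; apply half; ring. Qed.
Lemma img_neg t1 t2 x y : t1 = 2*x -> t2 = 2*y -> img (Isom lin_neg (t1,t2)) 0 0 = (x-1,y-1).
Proof. intros -> ->. unfold img, cell_of, app, lin_app; cbn [ilin tr sw nx ny fst snd lin_id lin_neg lin_D lin_mD]. f_equal; apply half; ring. Qed.
Lemma img_D t1 t2 j : t1 = 2*j -> t2 = -(2*j) -> img (Isom lin_D (t1,t2)) 0 0 = (j,-j).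
Proof. intros -> ->. unfold img, cell_of, app, lin_app; cbn [ilin tr sw nx ny fst snd lin_id lin_neg lin_D lin_mD]. f_equal; apply half; ring. Qed.
Lemma img_mD t1 t2 j : t1 = 2*j -> t2 = 2*j -> img (Isom lin_mD (t1,t2)) 0 0 = (j-1,j-1).
Proof. intros -> ->. unfold img, cell_of, app, lin_app; cbn [ilin tr sw nx ny fst snd lin_id lin_neg lin_D lin_mD]. f_equal; apply half; ring. Qed.

Definition Good (n s : Z) : Prop :=
  1 < s < n - 1 /\ Z.gcd n s = 1 /\ ~ (n | s*s+1) /\ (2*n | s*s-1) /\ Z.even n = true.

Definition four (a : lin) : Prop := a = lin_id \/ a = lin_neg \/ a = lin_D \/ a = lin_mD.

Lemma Good_pos n s : Good n s -> 3 < n.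
Proof. intros [H _]. destruct H. lia. Qed.

Lemma Good_ndiv n s : Good n s -> (n | s*s-1).
Proof. intros (_&_&_&[k Hk]&_). exists (k*2). lia. Qed.

Lemma Good_sodd n s : Good n s -> Z.Odd s.
Proof.
  intros (H1&H2&_&_&He). destruct (Z.Even_or_Odd s) as [[u Hu]|]; auto.
  apply Z.even_spec in He. destruct He as [v Hv].
  assert (Z.divide 2 (Z.gcd n s)) by (apply Z.gcd_greatest; [exists v|exists u]; lia).
  rewrite H2 in H. apply Z.divide_pos_le in H; lia.
Qed.

Lemma div_le_abs n e : (n | e) -> e <> 0 -> n <= Z.abs e.
Proof. intros H H0. apply Z.divide_pos_le; [lia|]. apply Z.divide_abs_r; auto. Qed.

Lemma Lm_add n s x y x' y' : Lm n s x y -> Lm n s x' y' -> Lm n s (x+x') (y+y').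
Proof. unfold Lm. intros. replace (x + x' - (y+y')*s) with ((x - y*s) + (x' - y'*s)) by ring.
  apply Z.divide_add_r; auto. Qed.
Lemma Lm_sub n s x y x' y' : Lm n s x y -> Lm n s x' y' -> Lm n s (x-x') (y-y').
Proof. unfold Lm. intros. replace (x - x' - (y-y')*s) with ((x - y*s) - (x' - y'*s)) by ring.
  apply Z.divide_sub_r; auto. Qed.

Lemma Lm_lin n s a c : Good n s -> four a -> LmP n s c -> LmP n s (lin_app a c).
Proof.
  intros G Ha. destruct c as [x y]. unfold LmP, Lm. cbn [fst snd].
  pose proof (Good_ndiv _ _ G) as Hd.
  destruct Ha as [ -> | [ -> | [ -> | -> ]]]; unfold lin_app; cbn [sw nx ny fst snd lin_id lin_neg lin_D lin_mD]; intro H.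
  - auto.
  - replace (- x - - y * s) with (-(x - y*s)) by ring. apply Z.divide_opp_r; auto.
  - replace (y - x*s) with ((x - y*s) * (-s) + (-y) * (s*s-1)) by ring.
    apply Z.divide_add_r; [apply Z.divide_mul_l | apply Z.divide_mul_r]; auto.
  - replace (- y - - x*s) with (-((x - y*s) * (-s) + (-y) * (s*s-1))) by ring.
    apply Z.divide_opp_r. apply Z.divide_add_r; [apply Z.divide_mul_l | apply Z.divide_mul_r]; auto.
Qed.

Lemma lin_invol a c : four a -> lin_app a (lin_app a c) = c.
Proof. destruct c as [x y]. intros [ -> | [ -> | [ -> | -> ]]]; unfold lin_app;
  cbn [sw nx ny fst snd lin_id lin_neg lin_D lin_mD]; f_equal; ring. Qed.

Lemma lin_zero a : lin_app a (0,0) = (0,0).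
Proof. destruct a as [[] [] []]; reflexivity. Qed.

Lemma sym_iff n s g tau : Good n s ->
  (is_sym (satin n s) g tau <->
   grid_preserving g /\ tau = sw (ilin g) /\ four (ilin g) /\ LmP n s (img g 0 0)).
Proof.
  intro G. pose proof (Good_pos _ _ G) as Hn.
  destruct G as (Hs&Hg&Hsq&Hd&He).
  split.
  - intros [Hgp H]. split; [exact Hgp|].
    assert (H' : forall x y, satin n s (fst (img g x y)) (snd (img g x y)) =
               xorb (satin n s x y) (xorb (sw (ilin g)) tau)) by exact H. clear H.
    set (c0 := img g 0 0) in *.
    assert (Himg : forall x y, img g x y = padd (lin_app (ilin g) (x,y)) c0)
      by (intros; apply img_formula; auto).
    destruct (xorb (sw (ilin g)) tau) eqn:E.
    + exfalso.
      assert (A1 := H' 1 0). assert (A2 := H' 2 0).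
      assert (S1 : satin n s 1 0 = false).
      { unfold satin. apply Z.eqb_neq. rewrite Z.mod_small; lia. }
      assert (S2 : satin n s 2 0 = false).
      { unfold satin. apply Z.eqb_neq. rewrite Z.mod_small; lia. }
      rewrite S1 in A1. rewrite S2 in A2. cbn [xorb] in A1, A2.
      apply satin_Lm in A1; [|lia]. apply satin_Lm in A2; [|lia].
      rewrite Himg in A1, A2. unfold padd in A1, A2. cbn [fst snd] in A1, A2.
      pose proof (Lm_sub _ _ _ _ _ _ A2 A1) as D.
      destruct (ilin g) as [[] [] []]; unfold lin_app in D;
        cbn [sw nx ny fst snd] in D; unfold Lm in D;
        match type of D with (n | ?e) => ring_simplify e in D end;
        apply div_le_abs in D; lia.
    + assert (Ht : tau = sw (ilin g)) by (destruct tau, (sw (ilin g)); simpl in E; congruence).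
      split; [exact Ht|].
      assert (L0 : LmP n s c0).
      { assert (A := H' 0 0). rewrite Himg, lin_zero in A.
        assert (S : satin n s 0 0 = true) by reflexivity. rewrite S in A. cbn [xorb] in A.
        apply satin_Lm in A; [|lia]. unfold LmP. unfold padd in A. cbn [fst snd] in A.
        rewrite !Z.add_0_l in A. exact A. }
      split; [|exact L0].
      assert (A := H' s 1). rewrite Himg in A.
      assert (S : satin n s s 1 = true).
      { apply satin_Lm; [lia|]. unfold Lm. exists 0. ring. }
      rewrite S in A. cbn [xorb] in A. apply satin_Lm in A; [|lia].
      unfold padd in A. cbn [fst snd] in A.
      pose proof (Lm_sub _ _ _ _ _ _ A L0) as D. cbn [fst snd] in D.
      rewrite !Z.add_simpl_r in D.
      unfold four. destruct (ilin g) as [[] [] []] eqn:Ea;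
        unfold lin_app in D; cbn [sw nx ny fst snd] in D; unfold Lm in D;
        try (left; reflexivity); try (right; left; reflexivity);
        try (right; right; left; reflexivity); try (right; right; right; reflexivity);
        exfalso.
      * apply Hsq. replace (s*s+1) with (-(-1 - s*s)) by ring.
        apply Z.divide_opp_r; auto.
      * apply Hsq. replace (s*s+1) with (1 - -s*s) by ring. auto.
      * assert (D2 : (n | s * 2)) by
          (replace (s*2) with (-(-s - 1*s)) by ring; apply Z.divide_opp_r; auto).
        apply Z.gauss in D2; auto. apply Z.divide_pos_le in D2; lia.
      * assert (D2 : (n | s * 2)) by (replace (s*2) with (s - -1*s) by ring; auto).
        apply Z.gauss in D2; auto. apply Z.divide_pos_le in D2; lia.
  - intros (Hgp&Ht&Hf&L0). split; [exact Hgp|].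
    intros x y. cbv zeta. fold (img g x y).
    rewrite img_formula by auto. rewrite Ht, xorb_nilpotent, xorb_false_r.
    apply eq_true_iff_eq. unfold padd. rewrite !satin_Lm by lia.
    split; intro H.
    + pose proof (Lm_sub _ _ _ _ _ _ H L0) as D. cbn [fst snd] in D.
      rewrite !Z.add_simpl_r in D.
      apply (Lm_lin n s (ilin g) (lin_app (ilin g) (x,y))) in D;
        [|repeat split; auto; lia|auto].
      rewrite lin_invol in D by auto. exact D.
    + apply Lm_add; [|exact L0].
      apply (Lm_lin n s (ilin g) (x,y)); [repeat split; auto; lia|auto|exact H].
Qed.

Definition PP (n s t : Z) : Prop := (n | (s-1)*t).
Definition QQ (n s t : Z) : Prop := (n | (s+1)*t).

Lemma even2 z : Z.even (2*z) = true.
Proof. rewrite Z.even_mul. reflexivity. Qed.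

Lemma htc_iff n s r : Good n s ->
  (htc (satin n s) r <-> Lm n s (fst r - 1) (snd r - 1)).
Proof.
  intro G. unfold htc, H1. rewrite sym_iff by auto.
  rewrite (img_neg _ _ (fst r) (snd r)) by reflexivity.
  unfold LmP; cbn [fst snd ilin]. split.
  - intros (_&_&_&H); exact H.
  - intro H. split; [split; apply even2|]. split; [reflexivity|].
    split; [right; left; reflexivity| exact H].
Qed.

Lemma even_ex k : Z.even k = true -> exists j, k = 2*j.
Proof. intro H. apply Z.even_spec in H. exact H. Qed.

Lemma mirror_false_iff n s k : Good n s ->
  (mirror (satin n s) false k <-> exists j, k = 2*j /\ QQ n s j).
Proof.
  intro G. unfold mirror, G1, refl. split.
  - intros [tau H]. apply sym_iff in H; auto. destruct H as ([Hk _]&_&_&H).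
    cbn [tr fst] in Hk. destruct (even_ex _ Hk) as [j ->]. exists j. split; auto.
    rewrite (img_D _ _ j) in H by reflexivity. unfold LmP, Lm in H; cbn [fst snd] in H.
    unfold QQ. replace ((s+1)*j) with (j - - j * s) by ring. exact H.
  - intros [j [-> H]]. exists true. apply sym_iff; auto.
    split; [split; cbn [tr fst snd]; [apply even2|rewrite Z.even_opp; apply even2]|].
    split; [reflexivity|]. split; [right; right; left; reflexivity|].
    rewrite (img_D _ _ j) by reflexivity. unfold LmP, Lm; cbn [fst snd].
    replace (j - - j * s) with ((s+1)*j) by ring. exact H.
Qed.

Lemma mirror_true_iff n s k : Good n s ->
  (mirror (satin n s) true k <-> exists j, k = 2*j /\ PP n s (j-1)).
Proof.
  intro G. unfold mirror, G1, refl. split.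
  - intros [tau H]. apply sym_iff in H; auto. destruct H as ([Hk _]&_&_&H).
    cbn [tr fst] in Hk. destruct (even_ex _ Hk) as [j ->]. exists j. split; auto.
    rewrite (img_mD _ _ j) in H by reflexivity. unfold LmP, Lm in H; cbn [fst snd] in H.
    unfold PP. apply Z.divide_opp_r. replace (-((s-1)*(j-1))) with (j - 1 - (j-1) * s) by ring. exact H.
  - intros [j [-> H]]. exists true. apply sym_iff; auto.
    split; [split; cbn [tr fst snd]; apply even2|].
    split; [reflexivity|]. split; [right; right; right; reflexivity|].
    rewrite (img_mD _ _ j) by reflexivity. unfold LmP, Lm; cbn [fst snd].
    replace (j - 1 - (j-1) * s) with (-((s-1)*(j-1))) by ring. apply Z.divide_opp_r. exact H.
Qed.

Lemma on_false n s j r : Good n s -> QQ n s j -> on_line false (2*j) r ->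
  (htc (satin n s) r <-> PP n s (fst r - (1+j))).
Proof.
  intros G Hq Hl. rewrite htc_iff by auto. unfold on_line in Hl.
  destruct r as [X Y]; cbn [fst snd] in *. assert (Y = X - 2*j) by lia. subst Y.
  unfold Lm, PP, QQ in *.
  replace (X - 1 - (X - 2*j - 1)*s) with (-((s-1)*(X-(1+j))) + (s+1)*j) by ring.
  split; intro H.
  - apply Z.divide_opp_r. apply (Z.divide_add_cancel_r _ _ _ Hq).
    rewrite Z.add_comm. exact H.
  - apply Z.divide_add_r; auto. apply Z.divide_opp_r; auto.
Qed.

Lemma on_true n s j r : Good n s -> PP n s (j-1) -> on_line true (2*j) r ->
  (htc (satin n s) r <-> QQ n s (fst r - j)).
Proof.
  intros G Hp Hl. rewrite htc_iff by auto. unfold on_line in Hl.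
  destruct r as [X Y]; cbn [fst snd] in *. assert (Y = 2*j - X) by lia. subst Y.
  unfold Lm, PP, QQ in *.
  replace (X - 1 - (2*j - X - 1)*s) with ((s+1)*(X-j) - (s-1)*(j-1)) by ring.
  split; intro H.
  - replace ((s+1)*(X-j)) with (((s+1)*(X-j) - (s-1)*(j-1)) + (s-1)*(j-1)) by ring.
    apply Z.divide_add_r; auto.
  - apply Z.divide_sub_r; auto.
Qed.

Lemma gen n c : 0 < n -> exists p, 0 < p /\ forall t, (n | c*t) <-> (p | t).
Proof.
  intro Hn.
  destruct (Z.gcd_divide_l n c) as [p Hp].
  destruct (Z.gcd_divide_r n c) as [c' Hc].
  set (g := Z.gcd n c) in *.
  assert (Hg0 : 0 <= g) by apply Z.gcd_nonneg.
  assert (Hg : 0 < g).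
  { destruct (Z.eq_dec g 0) as [E|E]; [|lia]. apply Z.gcd_eq_0_l in E. lia. }
  assert (Hpc : Z.gcd p c' = 1).
  { assert (E : g = Z.gcd p c' * g).
    { unfold g at 1. rewrite Hp at 1. rewrite Hc at 1. apply Z.gcd_mul_mono_r_nonneg; lia. }
    nia. }
  exists p. split; [nia|]. intro t. rewrite Hp, Hc.
  replace (c' * g * t) with ((c' * t) * g) by ring.
  rewrite Z.mul_divide_cancel_r by lia. split; intro H.
  - apply Z.gauss with c'; auto.
  - apply Z.divide_mul_r; auto.
Qed.

Lemma parity n s p q : Good n s -> 0 < p -> 0 < q ->
  (forall t, PP n s t <-> (p | t)) -> (forall t, QQ n s t <-> (q | t)) ->
  (n mod 4 = 2 -> Z.Odd p /\ Z.Odd q) /\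
  (n mod 4 = 0 -> (Z.Odd p /\ Z.Even q) \/ (Z.Even p /\ Z.Odd q)).
Proof.
  intros G Hp0 Hq0 HP HQ.
  pose proof (Good_pos _ _ G) as Hn.
  destruct (Good_sodd _ _ G) as [a Ha].
  destruct G as (_&_&_&[k Hk]&He). apply Z.even_spec in He. destruct He as [m Hm].
  assert (Pm : (p | m)). { apply HP. unfold PP. exists a. rewrite Ha, Hm. ring. }
  assert (Qm : (q | m)). { apply HQ. unfold QQ. exists (a+1). rewrite Ha, Hm. ring. }
  assert (Pb : (p | a+1)). { apply HP. unfold PP. exists k. subst s n. nia. }
  assert (Qa : (q | a)). { apply HQ. unfold QQ. exists k. subst s n. nia. }
  split.
  - intro H4. assert (Hmo : Z.Odd m).
    { destruct (Z.Even_or_Odd m) as [[u Hu]|]; auto.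
      exfalso. subst. rewrite Z.mul_assoc in H4. rewrite Z.mul_comm, Z.mod_mul in H4; lia. }
    destruct Hmo as [u Hu]. destruct Pm as [x Hx]. destruct Qm as [y Hy].
    split.
    + destruct (Z.Even_or_Odd p) as [[v Hv]|]; auto. exfalso. subst. nia.
    + destruct (Z.Even_or_Odd q) as [[v Hv]|]; auto. exfalso. subst. nia.
  - intro H4. assert (Hme : Z.Even m).
    { destruct (Z.Even_or_Odd m) as [|[u Hu]]; auto.
      exfalso. subst m. rewrite Hm in H4.
      replace (2 * (2*u+1)) with (2 + u*4) in H4 by ring.
      rewrite Z.mod_add in H4 by lia. rewrite Z.mod_small in H4; lia. }
    destruct Hme as [m' Hm'].
    destruct (Z.Even_or_Odd p) as [Ep|Op]; destruct (Z.Even_or_Odd q) as [Eq|Oq].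
    + exfalso. destruct Ep as [u ->]. destruct Eq as [v ->].
      destruct Pb as [x Hx]. destruct Qa as [y Hy]. nia.
    + right; auto.
    + left; auto.
    + exfalso.
      assert (Pm' : (p | m')).
      { destruct Pm as [x Hx]. destruct Op as [u Hu].
        destruct (Z.Even_or_Odd x) as [[w Hw]|[w Hw]]; [exists w; nia| exfalso; nia]. }
      assert (Qm' : (q | m')).
      { destruct Qm as [x Hx]. destruct Oq as [u Hu].
        destruct (Z.Even_or_Odd x) as [[w Hw]|[w Hw]]; [exists w; nia| exfalso; nia]. }
      apply HP in Pm'. apply HQ in Qm'. unfold PP, QQ in *.
      assert (D : (n | (s+1)*m' - (s-1)*m')) by (apply Z.divide_sub_r; auto).
      replace ((s+1)*m' - (s-1)*m') with (2*m') in D by ring.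
      destruct D as [z Hz]. assert (0 < m') by lia. assert (z*2 = 1) by nia. lia.
Qed.

Definition mk (dir : bool) (k X : Z) : point := (X, if dir then k - X else X - k).

Lemma mk_on dir k X : on_line dir k (mk dir k X).
Proof. destruct dir; unfold on_line, mk; cbn [fst snd]; ring. Qed.

Lemma line_snd dir k r : on_line dir k r -> snd r = fst r - k \/ snd r = k - fst r.
Proof. destruct dir; unfold on_line; lia. Qed.

Lemma centre_line dir k r : Z.even k = true -> on_line dir k r ->
  (is_cell_centre r <-> Z.Odd (fst r)).
Proof.
  intros Hk Hl. destruct (even_ex _ Hk) as [h ->]. apply line_snd in Hl.
  unfold is_cell_centre. rewrite !Z.odd_spec. split; [tauto|].
  intros [u Hu]. split; [exists u; lia|].
  destruct Hl as [E|E]; rewrite E; [exists (u-h)|exists (h-u-1)]; lia.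
Qed.

Lemma corner_line dir k r : Z.even k = true -> on_line dir k r ->
  (is_cell_corner r <-> Z.Even (fst r)).
Proof.
  intros Hk Hl. destruct (even_ex _ Hk) as [h ->]. apply line_snd in Hl.
  unfold is_cell_corner. rewrite !Z.even_spec. split; [tauto|].
  intros [u Hu]. split; [exists u; lia|].
  destruct Hl as [E|E]; rewrite E; [exists (u-h)|exists (h-u)]; lia.
Qed.

Lemma not_even_odd x : Z.Even x -> Z.Odd x -> False.
Proof. intros [u Hu] [v Hv]. lia. Qed.

Lemma alt_gen d dir k c per : Z.even k = true -> 0 < per -> Z.Odd per ->
  (forall r, on_line dir k r -> (htc d r <-> (per | fst r - c))) ->
  alternating_line d dir k.
Proof.
  intros Hk Hp Ho Hh. split; [|split].
  - exists (mk dir k c). split; [apply mk_on|]. apply Hh; [apply mk_on|].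
    unfold mk; cbn [fst]. rewrite Z.sub_diag. apply Z.divide_0_r.
  - intros r Hl _. destruct (Z.Even_or_Odd (fst r)).
    + right. apply (corner_line dir k); auto.
    + left. apply (centre_line dir k); auto.
  - intros p q (Hlp&Hlq&Hpp&Hqq&Hlt&Hno).
    apply Hh in Hpp; auto. apply Hh in Hqq; auto.
    destruct Hpp as [a Ha]. destruct Hqq as [b Hb].
    assert (Hab : a < b) by nia.
    assert (Hb1 : b = a + 1).
    { destruct (Z.eq_dec b (a+1)) as [|Hne]; auto. exfalso. apply Hno.
      exists (mk dir k (fst p + per)). split; [apply mk_on|]. split.
      - apply Hh; [apply mk_on|]. unfold mk; cbn [fst]. exists (a+1). lia.
      - unfold mk; cbn [fst]. nia. }
    subst b. assert (Eq : fst q = fst p + per) by lia.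
    rewrite (centre_line dir k p), (corner_line dir k q) by auto. rewrite Eq.
    destruct Ho as [w Hw]. split.
    + intros [u Hu]. exists (u + w + 1). lia.
    + intros [u Hu]. destruct (Z.Even_or_Odd (fst p)) as [[v Hv]|]; auto. exfalso. lia.
Qed.

Lemma pure_gen d dir k c per : Z.even k = true -> 0 < per -> Z.Even per ->
  (forall r, on_line dir k r -> (htc d r <-> (per | fst r - c))) ->
  (pure_line d dir k is_cell_centre <-> Z.Odd c) /\
  (pure_line d dir k is_cell_corner <-> Z.Even c).
Proof.
  intros Hk Hp [w Hw] Hh.
  assert (Ex : exists r, on_line dir k r /\ htc d r).
  { exists (mk dir k c). split; [apply mk_on|]. apply Hh; [apply mk_on|].
    unfold mk; cbn [fst]. rewrite Z.sub_diag. apply Z.divide_0_r. }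
  assert (Par : forall r, on_line dir k r -> htc d r -> exists z, fst r - c = 2*z).
  { intros r Hl Hr. apply Hh in Hr; auto. destruct Hr as [z Hz]. exists (z*w). subst per. lia. }
  split; split.
  - intros [[r [Hl Hr]] Hall]. specialize (Hall r Hl Hr).
    rewrite (centre_line dir k r) in Hall by auto. destruct (Par r Hl Hr) as [z Hz].
    destruct Hall as [u Hu]. exists (u - z). lia.
  - intros [u Hu]. split; auto. intros r Hl Hr.
    rewrite (centre_line dir k r) by auto. destruct (Par r Hl Hr) as [z Hz].
    exists (u + z). lia.
  - intros [[r [Hl Hr]] Hall]. specialize (Hall r Hl Hr).
    rewrite (corner_line dir k r) in Hall by auto. destruct (Par r Hl Hr) as [z Hz].
    destruct Hall as [u Hu]. exists (u - z). lia.
  - intros [u Hu]. split; auto. intros r Hl Hr.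
    rewrite (corner_line dir k r) by auto. destruct (Par r Hl Hr) as [z Hz].
    exists (u + z). lia.
Qed.

Lemma H1_trans n s t1 t2 x y : Good n s -> t1 = 2*x -> t2 = 2*y -> Lm n s x y ->
  H1 (satin n s) (Isom lin_id (t1, t2)).
Proof.
  intros G E1 E2 L. unfold H1. apply sym_iff; auto.
  split; [split; cbn [tr fst snd]; [rewrite E1|rewrite E2]; apply even2|].
  split; [reflexivity|]. split; [left; reflexivity|].
  rewrite (img_id _ _ x y) by auto. exact L.
Qed.

Lemma G1_trans n s t1 t2 x y : Good n s -> t1 = 2*x -> t2 = 2*y -> Lm n s x y ->
  G1 (satin n s) (Isom lin_id (t1, t2)).
Proof. intros. exists false. eapply H1_trans; eauto. Qed.

Lemma Lm_diag n s x y : Good n s -> Lm n s x y ->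
  exists w v, x = w + v /\ y = w - v /\ PP n s w /\ QQ n s v.
Proof.
  intros G [z Hz].
  destruct (Good_sodd _ _ G) as [a Ha].
  destruct G as (_&_&_&[k Hk]&He). apply Z.even_spec in He. destruct He as [m Hm].
  subst s n.
  assert (Hk' : a*a + a = k*m) by nia.
  exists (z*m + y*a + y), (z*m + y*a). split; [nia|]. split; [ring|]. split.
  - exists (a*z + k*y). transitivity (2*a*z*m + 2*y*(a*a+a)); [ring|]. rewrite Hk'. ring.
  - exists ((a+1)*z + k*y). transitivity (2*(a+1)*z*m + 2*y*(a*a+a)); [ring|]. rewrite Hk'. ring.
Qed.

Lemma Lm_P n s w : PP n s w -> Lm n s w w.
Proof. unfold PP, Lm. intro H. replace (w - w*s) with (-((s-1)*w)) by ring.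
  apply Z.divide_opp_r. auto. Qed.
Lemma Lm_Q n s v : QQ n s v -> Lm n s v (-v).
Proof. unfold QQ, Lm. intro H. replace (v - -v*s) with ((s+1)*v) by ring. auto. Qed.

Lemma rank2_G n s : Good n s -> forall (G : isom -> Prop),
  (forall t1 t2 x y, t1 = 2*x -> t2 = 2*y -> Lm n s x y -> G (Isom lin_id (t1,t2))) ->
  rank2_translations G.
Proof.
  intros Gd G HG. pose proof (Good_pos _ _ Gd).
  exists (Isom lin_id (2*n, 2*0)), (Isom lin_id (2*s, 2*1)).
  split; [apply (HG _ _ n 0); auto; exists 1; ring|].
  split; [apply (HG _ _ s 1); auto; exists 0; ring|].
  split; [reflexivity|]. split; [reflexivity|]. cbn [tr fst snd]. lia.
Qed.

Lemma species26_ok n s : Good n s -> species26 (satin n s).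
Proof.
  intro G. pose proof (Good_pos _ _ G) as Hn.
  split; [|split; [|split; [|split]]].
  - split; [|split; [|split; [|split]]].
    + apply (rank2_G n s G). intros; eapply G1_trans; eauto.
    + intros g [tau H]. apply sym_iff in H; auto. destruct H as (_&_&F&_). exact F.
    + exists (Isom lin_D (2*0, -(2*0))). split; [|split; [reflexivity|]].
      * exists true. apply sym_iff; auto.
        split; [split; cbn [tr fst snd]; reflexivity|].
        split; [reflexivity|]. split; [right; right; left; reflexivity|].
        rewrite (img_D _ _ 0) by reflexivity. exists 0. reflexivity.
      * split; [reflexivity|]. exists (0,0). reflexivity.
    + exists (Isom lin_mD (2*1, 2*1)). split; [|split; [reflexivity|]].
      * exists true. apply sym_iff; auto.
        split; [split; cbn [tr fst snd]; reflexivity|].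
        split; [reflexivity|]. split; [right; right; right; reflexivity|].
        rewrite (img_mD _ _ 1) by reflexivity. exists 0. reflexivity.
      * split; [reflexivity|]. exists (1,1). reflexivity.
    + intros g [tau H] Ht. apply sym_iff in H; auto. destruct H as (Hgp&_&_&L).
      destruct g as [a [t1 t2]]. unfold is_translation in Ht. cbn [ilin] in Ht. subst a.
      destruct Hgp as [E1 E2]. cbn [tr fst snd] in E1, E2.
      destruct (even_ex _ E1) as [x Hx]. destruct (even_ex _ E2) as [y Hy].
      rewrite (img_id _ _ x y) in L by auto. unfold LmP in L. cbn [fst snd] in L.
      destruct (Lm_diag _ _ _ _ G L) as (w&v&Ew&Ev&Pw&Qv).
      exists (2*w), (2*v). split; [|split].
      * eapply G1_trans; eauto. apply Lm_P; auto.
      * apply (G1_trans n s _ _ v (-v)); auto; [ring|]. apply Lm_Q; auto.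
      * cbn [tr]. f_equal; lia.
  - intros g tau H [Hr _]. apply sym_iff in H; auto. destruct H as (_&Ht&F&_).
    destruct F as [E|[E|[E|E]]]; rewrite E in Ht, Hr; cbn in Hr; try discriminate; exact Ht.
  - split; [|split].
    + apply (rank2_G n s G). intros; eapply H1_trans; eauto.
    + intros g H. unfold H1 in H. apply sym_iff in H; auto. destruct H as (_&Ht&F&_).
      unfold is_translation, is_halfturn.
      destruct F as [E|[E|[E|E]]]; rewrite E in Ht |- *; cbn in Ht; try discriminate; auto.
    + exists (Isom lin_neg (2*1, 2*1)). split; [|reflexivity].
      change (htc (satin n s) (1,1)). apply htc_iff; auto. exists 0. reflexivity.
  - exists (1,1). split; [|split; reflexivity]. apply htc_iff; auto. exists 0. reflexivity.
  - exists (1-s, 0). split.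
    + apply htc_iff; auto. exists 0. cbn [fst snd]. ring.
    + destruct (Good_sodd _ _ G) as [a Ha]. split; cbn [fst snd]; [|reflexivity].
      replace (1-s) with (2*(-a)) by lia. apply even2.
Qed.

Lemma odd_shift per x : Z.Odd per -> (Z.Odd x <-> Z.Even (x + per)).
Proof.
  intros [w Hw]. split.
  - intros [u Hu]. exists (u+w+1). lia.
  - intros [u Hu]. destruct (Z.Even_or_Odd x) as [[v Hv]|]; auto. exfalso. lia.
Qed.

Theorem theorem1 (n s : Z) :
  satin_rectangular n s ->
  Z.even n = true /\
  (n mod 4 = 2 -> species26o (satin n s)) /\
  (n mod 4 = 0 -> species26e (satin n s)).
Proof.
  intros (Hpar&_&Hnsq&He&Hdiv).
  destruct Hpar as [Hs Hg].
  assert (G : Good n s).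
  { split; [auto|]. split; [auto|]. split; [|auto].
    intro D. apply Hnsq. unfold satin_square. apply Z.mod_divide; auto. lia. }
  pose proof (Good_pos _ _ G) as Hn.
  destruct (gen n (s-1)) as (p&Hp0&HP); [lia|].
  destruct (gen n (s+1)) as (q&Hq0&HQ); [lia|].
  destruct (parity n s p q G Hp0 Hq0 HP HQ) as [Par2 Par0].
  assert (AltT : Z.Odd q -> forall k, mirror (satin n s) true k -> alternating_line (satin n s) true k).
  { intros Oq k Hm. apply mirror_true_iff in Hm; auto. destruct Hm as [j [-> Hj]].
    apply (alt_gen _ _ _ j q); auto; [apply even2|].
    intros r Hl. rewrite on_true by eauto. apply HQ. }
  assert (AltF : Z.Odd p -> forall k, mirror (satin n s) false k -> alternating_line (satin n s) false k).
  { intros Op k Hm. apply mirror_false_iff in Hm; auto. destruct Hm as [j [-> Hj]].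
    apply (alt_gen _ _ _ (1+j) p); auto; [apply even2|].
    intros r Hl. rewrite on_false by eauto. apply HP. }
  split; [exact He|]. split.
  - intro H4. destruct (Par2 H4) as [Op Oq]. split; [apply species26_ok; auto|].
    intros [] k Hm; [apply AltT|apply AltF]; auto.
  - intro H4. split; [apply species26_ok; auto|].
    destruct (Par0 H4) as [[Op Eq]|[Ep Oq]].
    + exists true. cbn [negb]. split; [apply AltF; auto|].
      assert (PG : forall j, PP n s (j-1) ->
        (pure_line (satin n s) true (2*j) is_cell_centre <-> Z.Odd j) /\
        (pure_line (satin n s) true (2*j) is_cell_corner <-> Z.Even j)).
      { intros j Hj. apply (pure_gen _ _ _ j q); auto; [apply even2|].
        intros r Hl. rewrite on_true by eauto. apply HQ. }
      split.
      * intros k Hm. apply mirror_true_iff in Hm; auto. destruct Hm as [j [-> Hj]].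
        destruct (PG j Hj) as [A B]. destruct (Z.Even_or_Odd j); [right; apply B|left; apply A]; auto.
      * intros k k' Hm Hm' Hlt Hno.
        apply mirror_true_iff in Hm; auto. destruct Hm as [j [-> Hj]].
        apply mirror_true_iff in Hm'; auto. destruct Hm' as [j' [-> Hj']].
        assert (Ej : j' = j + p).
        { pose proof Hj as Pj. pose proof Hj' as Pj'.
          apply HP in Pj, Pj'. destruct Pj as [a Ha]. destruct Pj' as [b Hb].
          assert (a < b) by nia.
          destruct (Z.eq_dec b (a+1)) as [|Hne]; [lia|]. exfalso. apply Hno.
          exists (2*(j+p)). split.
          - apply mirror_true_iff; auto. exists (j+p). split; auto.
            apply HP. exists (a+1). lia.
          - assert (b >= a+2) by lia. assert ((b-a)*p >= 2*p) by nia. lia. }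
        subst j'. destruct (PG j Hj) as [A _]. destruct (PG (j+p) Hj') as [_ B].
        rewrite A, B. apply odd_shift; auto.
    + exists false. cbn [negb]. split; [apply AltT; auto|].
      assert (PG : forall j, QQ n s j ->
        (pure_line (satin n s) false (2*j) is_cell_centre <-> Z.Odd (1+j)) /\
        (pure_line (satin n s) false (2*j) is_cell_corner <-> Z.Even (1+j))).
      { intros j Hj. apply (pure_gen _ _ _ (1+j) p); auto; [apply even2|].
        intros r Hl. rewrite on_false by eauto. apply HP. }
      split.
      * intros k Hm. apply mirror_false_iff in Hm; auto. destruct Hm as [j [-> Hj]].
        destruct (PG j Hj) as [A B]. destruct (Z.Even_or_Odd (1+j)); [right; apply B|left; apply A]; auto.
      * intros k k' Hm Hm' Hlt Hno.
        apply mirror_false_iff in Hm; auto. destruct Hm as [j [-> Hj]].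
        apply mirror_false_iff in Hm'; auto. destruct Hm' as [j' [-> Hj']].
        assert (Ej : j' = j + q).
        { pose proof Hj as Pj. pose proof Hj' as Pj'.
          apply HQ in Pj, Pj'. destruct Pj as [a Ha]. destruct Pj' as [b Hb].
          assert (a < b) by nia.
          destruct (Z.eq_dec b (a+1)) as [|Hne]; [lia|]. exfalso. apply Hno.
          exists (2*(j+q)). split.
          - apply mirror_false_iff; auto. exists (j+q). split; auto.
            apply HQ. exists (a+1). lia.
          - assert (b >= a+2) by lia. assert ((b-a)*q >= 2*q) by nia. lia. }
        subst j'. destruct (PG j Hj) as [A _]. destruct (PG (j+q) Hj') as [_ B].
        rewrite A, B. replace (1 + (j+q)) with ((1+j) + q) by ring. apply odd_shift; auto.
Qed.
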